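(* Let $\widetilde X$ be a pure $d$-multicomplex. The following are equivalent: (1) $\widetilde X$ is link-connected; (2) for every $-1\le j\le d-2$ and every $j$-multicell $\mathfrak a$ of $\widetilde X$ (for $j=-1$, $\mathfrak a$ is the empty multicell), any two $d$-multicells containing $\mathfrak a$ can be joined by a finite sequence of $d$-multicells, each containing $\mathfrak a$, such that any two consecutive ones contain a common $(d-1)$-multicell which itself contains $\mathfrak a$ (i.e. the link of $\mathfrak a$ is $(d-j-1)$-lower path connected).
   Context: A $d$-multicomplex is a triple $\widetilde X=(X,\mathsf m,\mathsf g)$: $X$ is a $d$-dimensional simplicial complex on a countable vertex set; $\mathsf m:X\to\mathbb N$ is a multiplicity function equal to $1$ on the empty cell and on vertices; the multicells are the pairs $(\tau,r)$ with $\tau\in X$, $1\le r\le \mathsf m(\tau)$, of dimension $\dim\tau$; and $\mathsf g$ assigns to every multicell $(\tau,r)$ and every codimension-one face $\sigma$ of $\tau$ a multicell $\mathsf g((\tau,r),\sigma)=(\sigma,s)$ (the copy of $\sigma$ glued to the boundary of $(\tau,r)$). Containment $\preceq$ is the reflexive–transitive closure of the relation ''$\mathfrak b=\mathsf g(\mathfrak a,\sigma)$ for some $\sigma$''. Consistency is required: if $\mathfrak b=(\sigma,s)$, $\mathfrak b'=(\sigma',s')$ are multicells of equal dimension contained in a common multicell and $\rho=\sigma\cap\sigma'$ has codimension one in both, then $\mathsf g(\mathfrak b,\rho)=\mathsf g(\mathfrak b',\rho)$. $\widetilde X$ is pure if every multicell is contained in some $d$-multicell. For a multicell $\mathfrak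 a$ of dimension $j\le d-2$, the $1$-skeleton of its link is the multigraph whose vertices are the $(j+1)$-multicells containing $\mathfrak a$ and whose edges are the $(j+2)$-multicells containing $\mathfrak a$, each joining the two $(j+1)$-multicells containing $\mathfrak a$ that it contains. $\widetilde X$ is link-connected if for every multicell $\mathfrak a$ of dimension at most $d-2$ (including the empty multicell) this multigraph is connected. *)

(* Defs.v *)
From mathcomp Require Import all_boot.
From Stdlib Require Import Relations.Relation_Operators.

Set Implicit Arguments.
Unset Strict Implicit.
Unset Printing Implicit Defensive.

(* Vertices are natural numbers (any countable vertex set, up to relabelling).
   A cell (simplex) is a finite set of vertices, represented canonically as a
   strictly increasing list of naturals; its dimension is [size tau - 1].     *)
Definition cell := seq nat.

(* A multicell (tau, r); it is a genuine multicell when tau is a cell of X and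
   1 <= r <= m tau. *)
Definition mcell := (cell * nat)%type.

Definition codim1 (sigma tau : cell) : Prop :=
  subseq sigma tau /\ (size sigma).+1 = size tau.

Definition is_simplicial_complex (d : nat) (X : cell -> Prop) : Prop :=
  [/\ forall tau, X tau -> sorted ltn tau,
      X [::],
      forall tau sigma, X tau -> subseq sigma tau -> X sigma,
      forall tau, X tau -> size tau <= d.+1
    & exists tau, X tau /\ size tau = d.+1].

Section Multicomplex.
Variables (X : cell -> Prop) (m : cell -> nat) (g : mcell -> cell -> nat).

Definition is_mcell (a : mcell) : Prop :=
  X a.1 /\ 1 <= a.2 <= m a.1.

Definition glue (a : mcell) (sigma : cell) : mcell := (sigma, g a sigma).

Definition step (b a : mcell) : Prop :=
  is_mcell a /\ exists sigma, codim1 sigma a.1 /\ b = glue a sigma.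

Definition contained (b a : mcell) : Prop := clos_refl_trans mcell step b a.

Definition cap (sigma sigma' : cell) : cell := [seq x <- sigma | x \in sigma'].

Definition consistent : Prop :=
  forall b b' c : mcell,
    is_mcell b -> is_mcell b' -> is_mcell c ->
    size b.1 = size b'.1 ->
    contained b c -> contained b' c ->
    codim1 (cap b.1 b'.1) b.1 -> codim1 (cap b.1 b'.1) b'.1 ->
    glue b (cap b.1 b'.1) = glue b' (cap b.1 b'.1).

End Multicomplex.

Definition is_multicomplex (d : nat) (X : cell -> Prop) (m : cell -> nat)
    (g : mcell -> cell -> nat) : Prop :=
  [/\ is_simplicial_complex d X,
      forall tau, X tau -> 1 <= m tau,
      m [::] = 1 /\ (forall v, X [:: v] -> m [:: v] = 1),
      forall a sigma, is_mcell X m a -> codim1 sigma a.1 ->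
        is_mcell X m (glue g a sigma)
    & consistent X m g].

Definition pure (d : nat) X m g : Prop :=
  forall a, is_mcell X m a ->
    exists c, [/\ is_mcell X m c, size c.1 = d.+1 & contained X m g a c].

(* 1-skeleton of the link of a multicell a with size a.1 = k (dimension k-1):
   vertices are the multicells u of size k+1 (dimension k) containing a;
   two vertices are adjacent when some multicell e of size k+2 containing a
   contains both of them. *)
Definition link_vertex X m g (a u : mcell) : Prop :=
  [/\ is_mcell X m u, size u.1 = (size a.1).+1 & contained X m g a u].

Definition link_adj X m g (a u v : mcell) : Prop :=
  [/\ link_vertex X m g a u, link_vertex X m g a v &
      exists e, [/\ is_mcell X m e, size e.1 = (size a.1).+2,
                    contained X m g a e, contained X m g u e
                  & contained X m g v e]].

(* link-connected: for every multicell a of dimension <= d-2 (i.e. size a.1 < d,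
   including the empty multicell), the 1-skeleton of its link is connected. *)
Definition link_connected (d : nat) X m g : Prop :=
  forall a, is_mcell X m a -> size a.1 < d ->
    forall u v, link_vertex X m g a u -> link_vertex X m g a v ->
      clos_refl_trans mcell (link_adj X m g a) u v.

Definition lower_adj (d : nat) X m g (a c c' : mcell) : Prop :=
  [/\ [/\ is_mcell X m c, size c.1 = d.+1 & contained X m g a c],
      [/\ is_mcell X m c', size c'.1 = d.+1 & contained X m g a c'] &
      exists f, [/\ is_mcell X m f, size f.1 = d,
                    contained X m g a f, contained X m g f c
                  & contained X m g f c']].

Definition links_lower_path_connected (d : nat) X m g : Prop :=
  forall a, is_mcell X m a -> size a.1 < d ->
    forall c c', is_mcell X m c -> size c.1 = d.+1 -> contained X m g a c ->
      is_mcell X m c' -> size c'.1 = d.+1 -> contained X m g a c' ->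
      clos_refl_trans mcell (lower_adj d X m g a) c c'.

(* Main.v *)
Require Import Defs.
From mathcomp Require Import all_boot.
From Stdlib Require Import Relations.Relation_Operators Relations.Operators_Properties.

Set Implicit Arguments.
Unset Strict Implicit.
Unset Printing Implicit Defensive.

Lemma sorted_subset_subseq (s1 s2 : seq nat) :
  sorted ltn s1 -> sorted ltn s2 -> {subset s1 <= s2} -> subseq s1 s2.
Proof.
move=> h1 h2 hs.
have -> : s1 = [seq x <- s2 | x \in s1].
  apply: (irr_sorted_eq ltn_trans ltnn) => //.
    exact: (sorted_filter ltn_trans).
  move=> x; rewrite mem_filter; case: (boolP (x \in s1)) => [xs|//]; by rewrite (hs _ xs).
exact: filter_subseq.
Qed.

Lemma sub_eq_size (s1 s2 : seq nat) : subseq s1 s2 -> size s2 <= size s1 -> s1 = s2.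
Proof.
move=> h hs; apply/eqP; rewrite -(size_subseq_leqif h).2.
by rewrite eqn_leq hs size_subseq.
Qed.

Lemma cap_eq (s t t' : seq nat) : sorted ltn s -> sorted ltn t -> sorted ltn t' ->
  subseq s t -> subseq s t' -> size t = (size s).+1 -> size t' = (size s).+1 ->
  t <> t' -> cap t t' = s.
Proof.
move=> ss st st' h h' e e' ne.
have sc : sorted ltn (cap t t') by exact: (sorted_filter ltn_trans).
have hsc : subseq s (cap t t').
  apply: sorted_subset_subseq => // z zs.
  by rewrite mem_filter (mem_subseq h' zs) (mem_subseq h zs).
have ct : subseq (cap t t') t by exact: filter_subseq.
case: (ltnP (size (cap t t')) (size t)) => hz.
  by apply/esym/sub_eq_size => //; rewrite -ltnS -e.
exfalso; apply: ne.
have E : cap t t' = t by apply: sub_eq_size.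
apply: sub_eq_size; last by rewrite e e'.
apply: sorted_subset_subseq => // z; rewrite -E mem_filter => /andP[] //.
Qed.

Section MC.
Variables (d : nat) (X : cell -> Prop) (m : cell -> nat) (g : mcell -> cell -> nat).
Hypothesis Hmc : is_multicomplex d X m g.

Local Notation mc := (is_mcell X m).
Local Notation cont := (contained X m g).

Lemma mc_sorted a : mc a -> sorted ltn a.1.
Proof. by case: Hmc => -[h _ _ _ _] _ _ _ _ [/h]. Qed.

Lemma glue_mc a s : mc a -> codim1 s a.1 -> mc (glue g a s).
Proof. by case: Hmc => _ _ _ h _; apply: h. Qed.

Lemma step_props b a : step X m g b a ->
  [/\ mc b, mc a, subseq b.1 a.1 & (size b.1).+1 = size a.1].
Proof.
case=> ha [s [[hs1 hs2] ->]]; split => //; exact: glue_mc.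
Qed.

Lemma cont_props b c : cont b c ->
  [/\ mc c -> mc b, subseq b.1 c.1 & b = c \/ size b.1 < size c.1].
Proof.
elim=> {b c} [b a /step_props [h1 h2 h3 h4]|x|x y z _ [i1 i2 i3] _ [j1 j2 j3]].
- by split => //; right; rewrite -h4.
- by split => //; left.
- split; first by move=> /j1 /i1.
  + exact: subseq_trans i2 j2.
  + case: i3 => [->|i3] //; case: j3 => [<-|j3]; [by right|].
    by right; apply: ltn_trans j3.
Qed.

Lemma cont_trans a b c : cont a b -> cont b c -> cont a c.
Proof. exact: rt_trans. Qed.

Lemma cont_mc b c : cont b c -> mc c -> mc b.
Proof. by case/cont_props. Qed.

Lemma cont_sub b c : cont b c -> subseq b.1 c.1.
Proof. by case/cont_props. Qed.

Lemma cont_size b c : cont b c -> size b.1 <= size c.1.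
Proof. by move/cont_sub/size_subseq. Qed.

Lemma cont_eq b c : cont b c -> size c.1 <= size b.1 -> b = c.
Proof.
by case/cont_props => _ _ [//|h] h'; exfalso; move: (leq_trans h h'); rewrite ltnn.
Qed.

Lemma cont_first a c : cont a c -> size a.1 < size c.1 ->
  exists u, step X m g a u /\ cont u c.
Proof.
move=> h; case: (clos_rt_rt1n _ _ _ _ h).
- by rewrite ltnn.
- move=> y z s h1 _; exists y; split => //; exact: clos_rt1n_rt.
Qed.

Lemma uniq_face n : forall b b' c, size c.1 - size b.1 = n -> mc c ->
  cont b c -> cont b' c -> b.1 = b'.1 -> b = b'.
Proof.
elim: n => [|n IH] b b' c hn hc hb hb' e.
  have s : size c.1 <= size b.1 by rewrite -subn_eq0 hn.
  rewrite (cont_eq hb s) (cont_eq hb') //; by rewrite -e.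
have lt : size b.1 < size c.1 by rewrite -subn_gt0 hn.
have lt' : size b'.1 < size c.1 by rewrite -e.
case: (cont_first hb lt) => t [st ht].
case: (cont_first hb' lt') => t' [st' ht'].
case: (step_props st) => mb mt sbt zbt.
case: (step_props st') => mb' mt' sbt' zbt'.
have nt : size c.1 - size t.1 = n by rewrite -zbt subnS hn.
case: st => _ [s [cs Eb]]; case: st' => _ [s' [cs' Eb']].
have Es : s = s' by move: e; rewrite Eb Eb'.
subst s'.
case: (eqVneq t.1 t'.1) => [tt|tt].
  by rewrite Eb Eb' (IH t t' c nt hc ht ht' tt).
have sz : size t.1 = size t'.1 by rewrite -zbt -zbt' e.
have Ecap : cap t.1 t'.1 = s.
  have ->: s = b.1 by rewrite Eb.
  apply: cap_eq => //; try exact: mc_sorted.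
  + by rewrite e.
  + by rewrite e zbt'.
  + by apply/eqP.
case: Hmc => _ _ _ _ hcons.
have := hcons t t' c mt mt' hc sz ht ht'; rewrite Ecap; move=> H.
by rewrite Eb Eb' H //; rewrite -Ecap.
Qed.

Lemma face_exists n : forall c s, size c.1 - size s = n -> mc c -> subseq s c.1 ->
  exists b, b.1 = s /\ cont b c.
Proof.
elim: n => [|n IH] c s hn hc hs.
  have s0 : size c.1 <= size s by rewrite -subn_eq0 hn.
  by exists c; split; [symmetry; apply: sub_eq_size | apply: rt_refl].
have sc := mc_sorted hc.
have uc : uniq c.1 by apply: (sorted_uniq ltn_trans ltnn).
case: (boolP (has (fun x => x \notin s) c.1)) => [/hasP [x xc xs]|/hasPn H].
  set t := rem x c.1.
  have cd : codim1 t c.1.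
    split; first exact: rem_subseq.
    rewrite size_rem //; case: (c.1) xc => //.
  have mt := glue_mc hc cd.
  have st : step X m g (glue g c t) c by split => //; exists t.
  have tt : sorted ltn t by apply: (subseq_sorted ltn_trans (rem_subseq _ _)).
  have sub : subseq s t.
    apply: sorted_subset_subseq => //.
      by apply: (subseq_sorted ltn_trans hs).
    move=> z zs; rewrite /t (mem_rem_uniq _ uc) inE (mem_subseq hs zs) andbT.
    by apply/eqP => E; move: xs; rewrite -E zs.
  have nt : size (glue g c t).1 - size s = n.
    by rewrite /= size_rem // -subn1 subnAC hn subn1.
  case: (IH _ _ nt mt sub) => b [Eb hb]; exists b; split => //.
  by apply: cont_trans hb (rt_step _ _ _ _ st).
exfalso.
have : size c.1 <= size s.
  apply: uniq_leq_size => // z zc; by move: (H z zc); rewrite negbK.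
by rewrite -subn_eq0 hn.
Qed.

Lemma face_cont b c e : mc c -> cont b c -> cont e c -> subseq b.1 e.1 -> cont b e.
Proof.
move=> hc hb he hs.
have me := cont_mc he hc.
case: (face_exists (erefl _) me hs) => b' [E hb'].
have := uniq_face (erefl _) hc (cont_trans hb' he) hb E.
by move=> <-.
Qed.

Lemma link_in_cell a c u w : mc c -> (size a.1).+2 <= size c.1 ->
  link_vertex X m g a u -> link_vertex X m g a w -> cont u c -> cont w c ->
  clos_refl_trans mcell (link_adj X m g a) u w.
Proof.
move=> hc hsz hu hw huc hwc.
case: (hu) => mu su au; case: (hw) => mw sw aw.
have sc := mc_sorted hc.
have uc : uniq c.1 by apply: (sorted_uniq ltn_trans ltnn).
have sortu := mc_sorted mu; have sortw := mc_sorted mw.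
case: (eqVneq u.1 w.1) => [E|NE].
  by rewrite (uniq_face (erefl _) hc huc hwc E); apply: rt_refl.
have [x xu xw] : exists2 x, x \in u.1 & x \notin w.1.
  case: (boolP (has (fun x => x \notin w.1) u.1)) => [/hasP [x ? ?]|/hasPn H].
    by exists x.
  exfalso; move/eqP: NE; apply; apply: sub_eq_size; last by rewrite su sw.
  apply: sorted_subset_subseq => // z zu; by move: (H z zu); rewrite negbK.
have xc : x \in c.1 by apply: (mem_subseq (cont_sub huc)).
set E := [seq z <- c.1 | (z \in w.1) || (z == x)].
have Ec : subseq E c.1 by apply: filter_subseq.
have sE : sorted ltn E by apply: (sorted_filter ltn_trans).
case: (face_exists (erefl _) hc Ec) => e [Ee he].
have me := cont_mc he hc.
have szE : size E = (size a.1).+2.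
  have -> : size E = size (x :: w.1).
    apply: perm_size; apply: uniq_perm.
    - exact: filter_uniq.
    - by rewrite /= xw (sorted_uniq ltn_trans ltnn).
    - move=> z; rewrite mem_filter inE.
      case: (eqVneq z x) => [->|_]; first by rewrite xc orbT.
      rewrite orbF /=; case: (boolP (z \in w.1)) => // zw.
      by rewrite (mem_subseq (cont_sub hwc) zw).
  by rewrite /= sw.
have we : cont w e.
  apply: (face_cont hc hwc he); rewrite Ee; apply: sorted_subset_subseq => // z zw.
  by rewrite mem_filter zw (mem_subseq (cont_sub hwc) zw).
have xa : x \notin a.1 by apply: contra xw; apply: (mem_subseq (cont_sub aw)).
have ue : cont u e.
  apply: (face_cont hc huc he); rewrite Ee; apply: sorted_subset_subseq => // z zu.
  rewrite mem_filter (mem_subseq (cont_sub huc) zu) andbT.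
  have eq : (x :: a.1) =i u.1.
    apply: (uniq_min_size _ _ _).2.
    + by rewrite /= xa (sorted_uniq ltn_trans ltnn) // (mc_sorted (cont_mc au mu)).
    + move=> y; rewrite inE => /orP [/eqP ->//|ya].
      exact: (mem_subseq (cont_sub au)).
    + by rewrite /= su.
  move: zu; rewrite -eq inE => /orP [->|za]; first by rewrite orbT.
  by rewrite (mem_subseq (cont_sub aw) za).
apply: rt_step; split => //; exists e; split => //.
- by rewrite Ee.
- exact: cont_trans au ue.
Qed.

End MC.

Lemma rtT A R (x y z : A) : clos_refl_trans A R x y -> clos_refl_trans A R y z ->
  clos_refl_trans A R x z.
Proof. exact: rt_trans. Qed.

Lemma lower_mono d X m g a w c c' : contained X m g a w ->
  clos_refl_trans mcell (lower_adj d X m g w) c c' ->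
  clos_refl_trans mcell (lower_adj d X m g a) c c'.
Proof.
move=> aw; elim=> {c c'} [x y [[h1 h2 h3] [j1 j2 j3] [f [f1 f2 f3 f4 f5]]]|x|x y z _ i _ j].
- apply: rt_step; split; [split|split|] => //; [exact: rtT aw h3|exact: rtT aw j3|].
  by exists f; split => //; apply: rtT aw f3.
- exact: rt_refl.
- exact: rt_trans i j.
Qed.

Theorem proposition3 (d : nat) (X : cell -> Prop) (m : cell -> nat)
    (g : mcell -> cell -> nat) :
  is_multicomplex d X m g -> pure d X m g ->
  (link_connected d X m g <-> links_lower_path_connected d X m g).
Proof.
move=> Hmc Hp; split.
- move=> H1.
  have Hstep : forall a, is_mcell X m a -> size a.1 < d ->
    (forall w, link_vertex X m g a w -> forall c c',
        is_mcell X m c -> size c.1 = d.+1 -> contained X m g w c ->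
        is_mcell X m c' -> size c'.1 = d.+1 -> contained X m g w c' ->
        clos_refl_trans mcell (lower_adj d X m g w) c c') ->
    forall c c', is_mcell X m c -> size c.1 = d.+1 -> contained X m g a c ->
      is_mcell X m c' -> size c'.1 = d.+1 -> contained X m g a c' ->
      clos_refl_trans mcell (lower_adj d X m g a) c c'.
    move=> a ma sa HW c c' mc sc ac mc' sc' ac'.
    have lv : forall u, step X m g a u -> link_vertex X m g a u.
      move=> u st; case: (step_props Hmc st) => _ mu _ su; split => //.
      exact: rt_step.
    have lvt : forall x y, clos_refl_trans mcell (link_adj X m g a) x y ->
        link_vertex X m g a x -> link_vertex X m g a y.
      move=> x y; elim => // [x0 y0 [] //|x0 y0 z0 _ i1 _ i2 h]; exact: (i2 (i1 h)).
    have [u [su uc]] : exists u, step X m g a u /\ contained X m g u c.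
      apply: (cont_first ac); rewrite sc; exact: ltn_trans sa _.
    have [u' [su' uc']] : exists u, step X m g a u /\ contained X m g u c'.
      apply: (cont_first ac'); rewrite sc'; exact: ltn_trans sa _.
    have := H1 a ma sa u u' (lv _ su) (lv _ su').
    move: (lv _ su) c mc sc uc c' mc' sc' uc' {ac ac'}.
    move=> + + + + + + + + + P; elim: P => {u u' su su' }.
    + move=> x y [hx hy [e [me se ae xe ye]]] _ c mc sc xc c' mc' sc' yc'.
      have [ce [mce sce ece]] := Hp e me.
      apply: (rtT (y := ce)).
      * apply: (lower_mono (w := x)); first by case: hx.
        apply: HW => //; exact: rtT xe ece.
      * apply: (lower_mono (w := y)); first by case: hy.
        apply: HW => //; exact: rtT ye ece.
    + move=> x hx c mc sc xc c' mc' sc' xc'.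
      apply: (lower_mono (w := x)); first by case: hx.
      exact: HW.
    + move=> x y z Pxy IHxy Pyz IHyz hx c mc sc xc c' mc' sc' zc'.
      have hy := lvt _ _ Pxy hx.
      have [cy [mcy scy ycy]] := Hp y (let: And3 h _ _ := hy in h).
      apply: (rtT (y := cy)).
      * exact: IHxy.
      * exact: IHyz.
  have main : forall n a, is_mcell X m a -> size a.1 + n.+1 = d ->
    forall c c', is_mcell X m c -> size c.1 = d.+1 -> contained X m g a c ->
      is_mcell X m c' -> size c'.1 = d.+1 -> contained X m g a c' ->
      clos_refl_trans mcell (lower_adj d X m g a) c c'.
    elim=> [|n IH] a ma sa; apply: Hstep => //; try by rewrite -sa addnS ltnS leq_addr.
      move=> w [mw sw aw] c c' mc sc wc mc' sc' wc'.
      apply: rt_step; split; [split|split|] => //.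
      exists w; split => //; [by rewrite sw -sa addn1| exact: rt_refl].
    move=> w [mw sw aw]; apply: IH => //; by rewrite sw addSn -addnS.
  move=> a ma sa; apply: (main (d - (size a.1).+1)) => //.
  by rewrite addnS -addSn subnKC.
- move=> H2 a ma sa u v hu hv.
  have [cu [mcu scu ucu]] := Hp u (let: And3 h _ _ := hu in h).
  have [cv [mcv scv vcv]] := Hp v (let: And3 h _ _ := hv in h).
  have acu : contained X m g a cu by apply: rtT ucu; case: hu.
  have acv : contained X m g a cv by apply: rtT vcv; case: hv.
  have P := H2 a ma sa cu cv mcu scu acu mcv scv acv.
  have sz : forall c : mcell, size c.1 = d.+1 -> (size a.1).+2 <= size c.1.
    by move=> c ->.
  pose Q c := [/\ is_mcell X m c, size c.1 = d.+1 &
    (forall w, link_vertex X m g a w -> contained X m g w c ->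
       clos_refl_trans mcell (link_adj X m g a) u w)].
  suff S : forall c c', clos_refl_trans_1n mcell (lower_adj d X m g a) c c' ->
    Q c -> Q c'.
    have Qcu : Q cu.
      split => // w hw wc; exact: (link_in_cell Hmc mcu (sz _ scu) hu hw ucu wc).
    have [_ _ H] := S cu cv (clos_rt_rt1n _ _ _ _ P) Qcu.
    exact: H.
  move=> c c'; elim=> // x y z [[mx sx ax] [my sy ay] [f [mf sf af fx fy]]] _ IH [_ _ Hx].
  apply: IH; split => // w hw wy.
  have [w0 [st w0f]] : exists w0, step X m g a w0 /\ contained X m g w0 f.
    apply: (cont_first af); by rewrite sf.
  have hw0 : link_vertex X m g a w0.
    case: (step_props Hmc st) => _ mw0 _ sw0; split => //.
    exact: rt_step.
  apply: rtT (Hx w0 hw0 (rtT w0f fx)) _.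
  exact: (link_in_cell Hmc my (sz _ sy) hw0 hw (rtT w0f fy) wy).
Qed.
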